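(* Let $P$ be a path with red edge costs in $\{a,b\}$, $0\le a<b$, and let $\sigma$ be the number of bad $a$-blocks of $P$. Let $r^*$ be the optimal revenue of $\mathsf{StackMST}(0,0)$ with red tree $P$. Then $$r^*\le c(P)-\min\left\{\sigma a,\ \left\lfloor\frac{\sigma}{2}\right\rfloor(b-a)+\left(\sigma-2\left\lfloor\frac{\sigma}{2}\right\rfloor\right)\min\{a,b-a\}\right\}.$$
   Context: Budgeted Stackelberg MST game $\mathsf{StackMST}(\gamma,\Delta)$: we are given a tree $T=(V,E(T))$ whose (red) edges have fixed costs $c(e)\ge 0$, a non-negative activation cost $\gamma(e)$ for every pair $e\notin E(T)$ of vertices, and a budget $\Delta$. The leader selects a set $F$ of pairs not in $E(T)$ with $\sum_{e\in F}\gamma(e)\le\Delta$ and prices $p:F\to\mathbb{R}^+$; the follower computes a minimum spanning tree $M$ of $(V,E(T)\cup F)$ (weights $c$ on red edges, $p$ on $F$), breaking ties in favor of the leader's revenue $\sum_{e\in F\cap M}p(e)$, which the leader maximizes. $\mathsf{StackMST}(0,0)$ is the case $\gamma\equiv0,\Delta=0$ (any new edges may be added freely). For the red path $P$: $c(P)$ is the total cost of its edges; an $a$-block is an inclusion-maximal subpath of $P$ all of whose edges have cost $a$; an $a$-block is good if it has at least 3 edges and bad otherwise. *)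

(* Defs.v *)
From HB Require Import structures.
From mathcomp Require Import all_boot all_order all_algebra.
Set Implicit Arguments. Unset Strict Implicit. Unset Printing Implicit Defensive.
Import Order.TTheory GRing.Theory Num.Theory.
Local Open Scope ring_scope.

(* Red path P on vertices 'I_n.+1 = {0,..,n}; red edge k (k < n) joins
   vertices k and k+1 and has cost c k.  An (undirected) edge {x,y} is
   represented by the ordered pair (x,y) with x < y. *)
Definition vpair (n : nat) := ('I_n.+1 * 'I_n.+1)%type.

Definition is_red (n : nat) (e : vpair n) : bool := (e.2 == (e.1).+1 :> nat).

Definition is_pair (n : nat) (e : vpair n) : bool := (e.1 < e.2)%N.

Definition red_edges (n : nat) : {set vpair n} := [set e | is_red e].

Definition leader_edges (n : nat) (F : {set vpair n}) : Prop :=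
  forall e, e \in F -> is_pair e && ~~ is_red e.

Definition weight (R : numDomainType) (n : nat) (c : nat -> R)
  (p : vpair n -> R) (e : vpair n) : R :=
  if is_red e then c (e.1 : nat) else p e.

Definition adj (n : nat) (M : {set vpair n}) : rel 'I_n.+1 :=
  fun x y => ((x, y) \in M) || ((y, x) \in M).

Definition spanning_tree (n : nat) (G M : {set vpair n}) : Prop :=
  [/\ M \subset G, #|M| = n & forall x y : 'I_n.+1, connect (adj M) x y].

Definition tree_weight (R : numDomainType) (n : nat) (c : nat -> R)
  (p : vpair n -> R) (M : {set vpair n}) : R :=
  \sum_(e in M) weight c p e.

Definition is_MST (R : numDomainType) (n : nat) (c : nat -> R)
  (F : {set vpair n}) (p : vpair n -> R) (M : {set vpair n}) : Prop :=
  spanning_tree (red_edges n :|: F) M /\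
  forall M', spanning_tree (red_edges n :|: F) M' ->
    tree_weight c p M <= tree_weight c p M'.

Definition revenue (R : numDomainType) (n : nat) (F : {set vpair n})
  (p : vpair n -> R) (M : {set vpair n}) : R :=
  \sum_(e in M :&: F) p e.

Definition path_cost (R : numDomainType) (n : nat) (c : nat -> R) : R :=
  \sum_(k < n) c k.

(* (i, l) is an a-block: edges i, ..., i+l-1 (l >= 1) all have cost a, and
   the subpath is inclusion-maximal. *)
Definition is_a_block (R : numDomainType) (n : nat) (c : nat -> R) (a : R)
  (il : 'I_n.+1 * 'I_n.+1) : bool :=
  let i := (il.1 : nat) in let l := (il.2 : nat) in
  [&& (0 < l)%N, (i + l <= n)%N,
      [forall k : 'I_n.+1, ((i <= k)%N && (k < i + l)%N) ==> (c k == a)],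
      (i == 0%N) || (c i.-1 != a) &
      (i + l == n) || (c (i + l)%N != a)].

Definition bad_a_blocks (R : numDomainType) (n : nat) (c : nat -> R) (a : R)
  : nat :=
  #|[set il : 'I_n.+1 * 'I_n.+1 | is_a_block c a il && ((il.2 : nat) < 3)%N]|.
Arguments path_cost R n c : clear implicits.
Arguments bad_a_blocks R n c a : clear implicits.
Arguments path_cost {R} n c.
Arguments bad_a_blocks {R} n c a.

(* Main.v *)
Require Import Defs.
From HB Require Import structures.
From mathcomp Require Import all_boot all_order all_algebra.
From mathcomp Require Import ring lra.
From mathcomp Require Import zify.
Import Order.TTheory GRing.Theory Num.Theory.

Local Close Scope ring_scope.

Lemma adj_sym {n} (E : {set vpair n}) : symmetric (adj E).
Proof. by move=> x y; rewrite /adj orbC. Qed.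

Lemma conn_sym {n} (E : {set vpair n}) x y :
  connect (adj E) x y = connect (adj E) y x.
Proof.
have gen : forall (x0 y0 : 'I_n.+1), connect (adj E) x0 y0 -> connect (adj E) y0 x0.
  move=> x0 y0 /connectP[q pq ->]; elim: q x0 pq => [|z q IH] x0 /=.
    by rewrite connect0.
  move=> /andP[exz /IH h]; apply: connect_trans h (connect1 _).
  by rewrite adj_sym.
by apply/idP/idP => /gen.
Qed.

Lemma adj_mono {n} {E E' : {set vpair n}} : E \subset E' -> forall x y, adj E x y -> adj E' x y.
Proof.
by move=> /subsetP s x y /orP[h|h]; apply/orP; [left|right]; apply: s.
Qed.

Lemma conn_mono {n} {E E' : {set vpair n}} : E \subset E' ->
  forall x y, connect (adj E) x y -> connect (adj E') x y.
Proof.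
move=> s; apply: connect_sub => x y h; apply: connect1; exact: adj_mono h.
Qed.

Definition cls {n} (E : {set vpair n}) (x : 'I_n.+1) : {set 'I_n.+1} :=
  [set y | connect (adj E) x y].
Definition comp {n} (E : {set vpair n}) : nat := #|[set cls E x | x : 'I_n.+1]|.

Lemma cls_eq {n} (E : {set vpair n}) x y : (cls E x == cls E y) = connect (adj E) x y.
Proof.
apply/eqP/idP => [h|h].
  have : y \in cls E y by rewrite inE connect0.
  by rewrite -h inE.
apply/setP=> z; rewrite !inE; apply/idP/idP => hz.
  by apply: connect_trans hz; rewrite conn_sym.
exact: connect_trans h hz.
Qed.

Lemma cls_eqP {n} (E : {set vpair n}) x y :
  reflect (cls E x = cls E y) (connect (adj E) x y).
Proof. by rewrite -cls_eq; apply: eqP. Qed.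

Lemma conn_split {n} (E : {set vpair n}) g : let E' := E :\ g in
  forall u w, connect (adj E) u w ->
  connect (adj E') u w \/
  ((connect (adj E') u g.1 || connect (adj E') u g.2) &&
   (connect (adj E') g.1 w || connect (adj E') g.2 w)).
Proof.
move=> E' u w /connectP[q pq ->]; elim: q u pq => [|v q IH] u /=.
  by left; rewrite connect0.
move=> /andP[euv /IH h].
have [ed | ed] : adj E' u v \/ (u = g.1 /\ v = g.2 \/ u = g.2 /\ v = g.1).
  case/orP: euv => h1.
    case: (eqVneq (u, v) g) => [<-|ne]; [by right; left|].
    by left; rewrite /adj !inE ne h1.
  case: (eqVneq (v, u) g) => [<-|ne]; [by right; right|].
  by left; rewrite /adj !inE ne h1 orbT.
  case: h => [h|/andP[h1 h2]].
    by left; apply: connect_trans (connect1 ed) h.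
  by right; rewrite h2 andbT; case/orP: h1 => h1;
     rewrite (connect_trans (connect1 ed) h1) ?orbT.
right; case: h => [h|/andP[_ h2]]; last first.
  by rewrite h2 andbT; case: ed => -[-> _]; rewrite connect0 ?orbT.
by case: ed => -[? ?]; subst u v; rewrite connect0 h ?orbT.
Qed.

Lemma comp_del {n} (E : {set vpair n}) g : comp (E :\ g) <= (comp E).+1.
Proof.
set E' := E :\ g.
pose T (S : {set 'I_n.+1}) := [set z | [exists u in S, connect (adj E) u z]].
have sE : E' \subset E by apply: subsetDl.
have Tc : forall v, T (cls E' v) = cls E v.
  move=> v; apply/setP=> z; rewrite !inE; apply/existsP/idP.
    case=> u /andP[]; rewrite inE => h1 h2.
    apply: connect_trans h2; exact: (conn_mono sE _ _ h1).
  by move=> h; exists v; rewrite inE connect0.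
rewrite /comp; set A := [set cls E' x | x : 'I_n.+1].
have -> : [set cls E x | x : 'I_n.+1] = T @: A.
  apply/setP=> S; apply/imsetP/imsetP => -[x hx ->].
    by exists (cls E' x); [apply: imset_f | rewrite Tc].
  by case/imsetP: hx => y _ -> ; exists y; rewrite // Tc.
have inj : {in A :\ cls E' g.1 &, injective T}.
  move=> S1 S2 /setD1P[n1 /imsetP[u _ eu]] /setD1P[n2 /imsetP[w _ ew]]; subst S1 S2.
  rewrite !Tc => /cls_eqP /(conn_split E g) [h|/andP[h1 h2]].
    by apply/cls_eqP.
  have {n1}n1 : ~~ connect (adj E') u g.1.
    by apply/negP => h; move/eqP: n1; apply; apply/cls_eqP.
  have {n2}n2 : ~~ connect (adj E') w g.1.
    by apply/negP => h; move/eqP: n2; apply; apply/cls_eqP.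
  rewrite conn_sym in n2.
  have hu : connect (adj E') u g.2.
    by case/orP: h1 => // h; rewrite h in n1.
  have hw : connect (adj E') g.2 w.
    case/orP: h2 => // h; by rewrite h in n2.
  by apply/cls_eqP; exact: connect_trans hu hw.
have h1 := card_in_imset inj.
have h2 : #|T @: (A :\ cls E' g.1)| <= #|T @: A|.
  by apply: subset_leq_card; apply: imsetS; apply: subsetDl.
have h3 := cardsD1 (cls E' g.1) A.
have h4 : (cls E' g.1 \in A) <= 1 by case: (_ \in A).
by rewrite h3 -h1 addnC; have := leq_add h2 h4; rewrite addn1.
Qed.

Lemma comp0 {n} : comp (set0 : {set vpair n}) = n.+1.
Proof.
have c0 : forall x y : 'I_n.+1, connect (adj (set0 : {set vpair n})) x y -> x = y.
  move=> x y /connectP[[|z q] /= pq ->] //.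
  by case/andP: pq; rewrite /adj !inE.
rewrite /comp; have -> : [set cls (set0 : {set vpair n}) x | x : 'I_n.+1] = [set [set x] | x : 'I_n.+1].
  apply: eq_imset => x; apply/setP => y; rewrite !inE.
  apply/idP/eqP => [/c0 -> //|->]; exact: connect0.
by rewrite card_imset ?cardsT ?card_ord //; apply: set1_inj.
Qed.

Lemma compA {n} (E : {set vpair n}) : n.+1 <= comp E + #|E|.
Proof.
have [k hE] : exists k, #|E| = k by eexists.
elim: k E hE => [|k IH] E hE.
  by rewrite (cards0_eq hE) comp0 cards0 addn0.
have : 0 < #|E| by rewrite hE.
rewrite card_gt0 => /set0Pn[g gE].
have hE' : #|E :\ g| = k by move: hE; rewrite (cardsD1 g) gE add1n => -[].
have := IH _ hE'; have := comp_del E g.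
rewrite hE hE' => h1 h2; apply: (leq_trans h2).
by rewrite addnS -addSn leq_add2r.
Qed.

Lemma comp_le1 {n} (E : {set vpair n}) :
  (forall x y, connect (adj E) x y) -> comp E <= 1.
Proof.
move=> h; rewrite /comp -(cards1 (cls E ord0)); apply: subset_leq_card.
apply/subsetP => S /imsetP[x _ ->]; rewrite inE; apply/eqP/cls_eqP; exact: h.
Qed.

Lemma adj_del {n} {M : {set vpair n}} e w v : adj M w v ->
  adj (M :\ e) w v \/ (w = e.1 /\ v = e.2 \/ w = e.2 /\ v = e.1).
Proof.
case/orP => h1.
  case: (eqVneq (w, v) e) => [<-|ne]; [by right; left|].
  by left; rewrite /adj !inE ne h1.
case: (eqVneq (v, w) e) => [<-|ne]; [by right; right|].
by left; rewrite /adj !inE ne h1 orbT.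
Qed.

Lemma del_conn {n} {M : {set vpair n}} e :
  (forall x y, connect (adj M) x y) ->
  forall z, connect (adj (M :\ e)) e.1 z || connect (adj (M :\ e)) e.2 z.
Proof.
move=> hc z; have /connectP[q pq ->] := hc e.1 z.
pose P x := connect (adj (M :\ e)) e.1 x || connect (adj (M :\ e)) e.2 x.
have gen : forall q w, path (adj M) w q -> P w -> P (last w q).
  elim=> [|v q' IH] w //= /andP[hwv pq'] hw; apply: IH => //.
  case: (adj_del e _ _ hwv) => [h|[[_ ->]|[_ ->]]]; rewrite /P ?connect0 ?orbT //.
  by case/orP: hw => hw; rewrite (connect_trans hw (connect1 h)) ?orbT.
by apply: gen => //; rewrite /P connect0.
Qed.

Lemma cross_edge {n} (M : {set vpair n}) (S : pred 'I_n.+1) z w :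
  connect (adj M) z w -> S w -> ~~ S z ->
  exists e u v, [/\ e \in M, e = (u, v) \/ e = (v, u), ~~ S u, S v &
                 connect (adj (M :\ e)) z u].
Proof.
move=> /connectP[q pq ->]; elim: q z pq => [|v q IH] z /=; first by move=> _ ->.
move=> /andP[hzv pq] hl hz.
case hv: (S v).
  case/orP: hzv => h.
    by exists (z, v), z, v; split; rewrite ?connect0 ?hv //; left.
  by exists (v, z), z, v; split; rewrite ?connect0 ?hv //; right.
have [e [u [v' [eM ee hu hv' hc]]]] := IH v pq hl (negbT hv).
exists e, u, v'; split => //.
apply: connect_trans hc; apply: connect1.
have ne : forall x y, ~~ S x -> ~~ S y -> (x, y) != e.
  move=> x y hx hy; apply/eqP => exy; case: ee => eq; rewrite eq in exy;
    case: exy => ? ?; subst; by rewrite hv' in hx hy.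
by case/orP: hzv => h; rewrite /adj !inE h ?ne ?orbT // hv.
Qed.

Local Open Scope ring_scope.

Definition Xt {R : numDomainType} {n} (c : nat -> R) (p : vpair n -> R)
  (M : {set vpair n}) (t : R) : {set vpair n} :=
  [set e in M | weight c p e <= t].

Lemma exchange (R : realFieldType) n (c : nat -> R) (F : {set vpair n})
  (p : vpair n -> R) (M : {set vpair n}) (hM : is_MST c F p M) (t : R) g :
  g \in red_edges n :|: F -> weight c p g <= t ->
  connect (adj (Xt c p M t)) g.1 g.2.
Proof.
move=> gG gt; case: hM => [[sM cM hconn] hmin].
set X := Xt c p M t.
apply/negPn/negP => nc.
have XM : X \subset M by apply/subsetP => x; rewrite inE => /andP[].
have [e [u [v [eM ee hu hv hcu]]]] :=
  @cross_edge n M (fun x => connect (adj X) g.1 x) g.2 g.1 (hconn _ _)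
    (connect0 _ _) nc.
have we : t < weight c p e.
  rewrite ltNge; apply/negP => et.
  have eX : e \in X by rewrite inE eM et.
  have : adj X v u by case: ee => ee; rewrite ee in eX; rewrite /adj eX ?orbT.
  by move=> /connect1 h; move: hu; rewrite (connect_trans hv h).
have gM : g \notin M.
  apply/negP => gM; move/negP: nc; apply; apply: connect1.
  by rewrite /adj -surjective_pairing /X /Xt inE gM gt.
have eX : e \notin X by rewrite inE negb_and; apply/orP; right; rewrite -ltNge.
have XMe : X \subset M :\ e.
  apply/subsetP => x xX; apply/setD1P; split; last exact: (subsetP XM _ xX).
  by apply/eqP => exe; rewrite -exe xX in eX.
set M' := g |: (M :\ e).
have gMe : g \notin M :\ e by rewrite inE negb_and gM orbT.
have sMeM' : M :\ e \subset M' by apply: subsetUr.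
have stM' : spanning_tree (red_edges n :|: F) M'.
  split.
  - apply/subsetP => x /setU1P[-> //|].
    by move=> /setD1P[_ /(subsetP sM)].
  - by have := cardsD1 e M; rewrite eM cM => h; rewrite cardsU1 gMe -h.
  have huv : connect (adj M') u v.
    have h1 : connect (adj M') g.2 u := conn_mono sMeM' _ _ hcu.
    have h2 : connect (adj M') g.1 v := conn_mono sMeM' _ _ (conn_mono XMe _ _ hv).
    have h3 : connect (adj M') g.1 g.2.
      by apply: connect1; rewrite /adj -surjective_pairing setU11.
    rewrite conn_sym in h1; rewrite conn_sym in h3.
    exact: connect_trans h1 (connect_trans h3 h2).
  have h12 : connect (adj M') e.1 e.2.
    by case: ee => ->; rewrite //= conn_sym.
  move=> x y.
  have toe1 : forall z, connect (adj M') e.1 z.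
    move=> z; case/orP: (del_conn e hconn z) => h.
      exact: conn_mono sMeM' _ _ h.
    exact: connect_trans h12 (conn_mono sMeM' _ _ h).
  by apply: connect_trans (toe1 y); rewrite conn_sym.
have := hmin _ stM'; rewrite /tree_weight (big_setD1 e eM) big_setU1 //=.
rewrite lerD2r => hle.
by move: (le_lt_trans hle (le_lt_trans gt we)); rewrite ltxx.
Qed.

Local Close Scope ring_scope.

Lemma path_conn {n} (E : {set vpair n}) :
  (forall k, k < n -> connect (adj E) (inord k) (inord k.+1)) ->
  forall x y : 'I_n.+1, connect (adj E) x y.
Proof.
move=> h.
have h0 : forall v, v <= n -> connect (adj E) ord0 (inord v).
  elim=> [|v IH] hv.
    by apply: eq_connect0; apply: val_inj; rewrite /= inordK.
  exact: connect_trans (IH (ltnW hv)) (h v hv).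
move=> x y; have hy := h0 y (leq_ord y); have hx := h0 x (leq_ord x).
rewrite inord_val in hx; rewrite inord_val in hy; rewrite conn_sym in hx.
exact: connect_trans hx hy.
Qed.

Lemma last_step {n} (E : {set vpair n}) x y : connect (adj E) x y -> x != y ->
  exists z, connect (adj E) x z /\ adj E z y.
Proof.
move=> /connectP[q pq ->]; case/lastP: q pq => [|q z] /=; first by rewrite eqxx.
rewrite rcons_path last_rcons => /andP[pq hz] _.
by exists (last x q); split => //; apply/connectP; exists q.
Qed.

Lemma fiber_count (T U : finType) (f : T -> U) (A W : {set T}) :
  W \subset A ->
  (forall w, w \in W -> exists2 w', w' \in A & (w' != w) && (f w' == f w)) ->
  #|W| + 2 * #|f @: A| <= 2 * #|A|.
Proof.
have [k hk] : exists k, #|A| <= k by exists #|A|.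
elim: k A W hk => [|k IH] A W hk sWA hW.
  have A0 : A = set0 by apply: cards0_eq; move: hk; rewrite leqn0 => /eqP.
  move: sWA; rewrite A0 subset0 => /eqP ->.
  by rewrite imset0 !cards0.
case: (eqVneq A set0) => [A0|/set0Pn [x xA]].
  move: sWA; rewrite A0 subset0 => /eqP ->.
  by rewrite imset0 !cards0.
pose Fa := [set y in A | f y == f x].
pose A' := A :\: Fa.
have xF : x \in Fa by rewrite inE xA eqxx.
have cA := cardsID Fa A.
have AF : A :&: Fa = Fa by apply/setIidPr; apply/subsetP => y; rewrite inE => /andP[].
rewrite AF in cA.
have Fpos : 0 < #|Fa| by rewrite card_gt0; apply/set0Pn; exists x.
have hA' : #|A'| <= k by rewrite /A'; lia.
have W'sub : W :&: A' \subset A' by apply: subsetIr.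
have W'prop : forall w, w \in W :&: A' ->
    exists2 w', w' \in A' & (w' != w) && (f w' == f w).
  move=> w /setIP[wW wA']; have [w' w'A /andP[ne ef]] := hW w wW.
  exists w'; last by rewrite ne ef.
  move: wA'; rewrite /A' !inE => /andP[hwF hwA].
  by rewrite w'A andbT (eqP ef); rewrite hwA in hwF.
have IH' := IH A' (W :&: A') hA' W'sub W'prop.
have cW := cardsID Fa W.
have cW2 : #|W :\: Fa| <= #|W :&: A'|.
  apply: subset_leq_card; apply/subsetP => y /setDP[yW yF].
  by rewrite inE yW inE yF (subsetP sWA _ yW).
have cimg : #|f @: A| <= (#|f @: A'|).+1.
  apply: (leq_trans (subset_leq_card (_ : f @: A \subset f x |: f @: A'))).
    apply/subsetP => _ /imsetP[y yA ->].
    case yF: (y \in Fa).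
      by move: yF; rewrite inE => /andP[_ /eqP ->]; rewrite setU11.
    by rewrite setU1r // imset_f // inE yF yA.
  by rewrite cardsU1; case: (_ \notin _).
have key : #|W :&: Fa| + 2 <= 2 * #|Fa|.
  case: (eqVneq (W :&: Fa) set0) => [->|/set0Pn [w /setIP[wW wF]]].
    by rewrite cards0; lia.
  have [w' w'A /andP[ne ef]] := hW w wW.
  have w'F : w' \in Fa.
    by move: wF; rewrite !inE w'A (eqP ef) => /andP[].
  have : #|[set w; w']| <= #|Fa|.
    by apply: subset_leq_card; apply/subsetP => y /set2P[] ->.
  rewrite cards2 eq_sym ne /= => h2.
  have : #|W :&: Fa| <= #|Fa| by apply: subset_leq_card; apply: subsetIr.
  lia.
move: IH' cW2 cimg; rewrite /A' => IH' cW2 cimg; lia.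
Qed.

Local Close Scope ring_scope.

Definition redp n (k : nat) : vpair n := (inord k, inord k.+1).

Lemma redp_red {n k} : k < n -> redp n k \in red_edges n.
Proof.
by move=> kn; rewrite inE /is_red /redp /= !inordK // ltnS // ltnW.
Qed.

Lemma redp_weight {R : numDomainType} n (c : nat -> R) p k : k < n ->
  weight c p (redp n k) = c k.
Proof.
move=> kn; rewrite /weight.
have -> : is_red (redp n k) by move: (redp_red kn); rewrite inE.
by rewrite /redp /= inordK // ltnS ltnW.
Qed.

Lemma red_redp n (e : vpair n) : is_red e -> e = redp n e.1 /\ e.1 < n.
Proof.
rewrite /is_red => /eqP h.
have e1n : e.1 < n by rewrite -ltnS -h.
split=> //; case: e h e1n => x y /= h _; rewrite /redp.
by congr pair; apply: val_inj; rewrite /= ?inord_val // inordK // -h.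
Qed.

Fixpoint stn {R : eqType} (c : nat -> R) (a : R) (k : nat) : nat :=
  match k with 0 => 0 | k'.+1 => if c k' == a then stn c a k' else k'.+1 end.

Lemma stn_le {R : eqType} c (a : R) k : stn c a k <= k.
Proof. by elim: k => //= k IH; case: ifP => // _; apply: leqW. Qed.

Lemma stn_start {R : eqType} c (a : R) k :
  (stn c a k == 0) || (c (stn c a k).-1 != a).
Proof. by elim: k => //= k IH; case: ifP => // ->. Qed.

Lemma stn_ge {R : eqType} c (a : R) k v : k < v -> c k != a -> k < stn c a v.
Proof.
elim: v => // v IH; rewrite ltnS leq_eqVlt => /orP[/eqP -> /= /negbTE -> //|kv ck].
by rewrite /=; case: ifP => // _; [apply: IH|apply: ltnW].
Qed.

Lemma stn_fix {R : eqType} c (a : R) i : (i == 0) || (c i.-1 != a) -> stn c a i = i.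
Proof. by case: i => //= i /negbTE ->. Qed.

Lemma stn_conn {R : eqType} n c (a : R) (E : {set vpair n}) :
  (forall k, k < n -> c k = a -> connect (adj E) (inord k) (inord k.+1)) ->
  forall v, v <= n -> connect (adj E) (inord (stn c a v)) (inord v).
Proof.
move=> h; elim=> [|v IH] hv /=; first exact: connect0.
case: ifP => [/eqP ck|_]; last exact: connect0.
exact: connect_trans (IH (ltnW hv)) (h v hv ck).
Qed.

Lemma blockP {R : numDomainType} n (c : nat -> R) a (il : 'I_n.+1 * 'I_n.+1) :
  is_a_block c a il ->
  [/\ 0 < il.2, il.1 + il.2 <= n,
      forall k, il.1 <= k < il.1 + il.2 -> c k = a,
      (il.1 == 0 :> nat) || (c (il.1).-1 != a) &
      (il.1 + il.2 == n) || (c (il.1 + il.2) != a)].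
Proof.
case/and5P => h1 h2 /forallP h3 h4 h5; split => // k /andP[k1 k2].
have kn : k < n.+1 by rewrite ltnS; apply: leq_trans h2; apply: ltnW.
by have := h3 (inord k); rewrite inordK // k1 k2 => /eqP.
Qed.

Lemma block_uniq {R : numDomainType} n (c : nat -> R) a (il il' : 'I_n.+1 * 'I_n.+1) k :
  is_a_block c a il -> is_a_block c a il' ->
  il.1 <= k < il.1 + il.2 -> il'.1 <= k < il'.1 + il'.2 -> il = il'.
Proof.
move=> /blockP[p1 p2 p3 p4 p5] /blockP[q1 q2 q3 q4 q5] /andP[k1 k2] /andP[k3 k4].
have e1 : il.1 = il'.1 :> nat.
  case: (ltngtP il.1 il'.1) => // h.
    have hc : c (il'.1).-1 = a by apply: p3; lia.
    have : (il'.1 == 0 :> nat) = false by apply/negbTE; lia.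
    by move: q4 => /orP[->|]; rewrite // hc eqxx.
  have hc : c (il.1).-1 = a by apply: q3; lia.
  have : (il.1 == 0 :> nat) = false by apply/negbTE; lia.
  by move: p4 => /orP[->|]; rewrite // hc eqxx.
have e2 : il.2 = il'.2 :> nat.
  case: (ltngtP il.2 il'.2) => // h.
    have hc : c (il.1 + il.2) = a by apply: q3; lia.
    have : (il.1 + il.2 == n) = false by apply/negbTE; lia.
    by move: p5 => /orP[->|]; rewrite // hc eqxx.
  have hc : c (il'.1 + il'.2) = a by apply: p3; lia.
  have : (il'.1 + il'.2 == n) = false by apply/negbTE; lia.
  by move: q5 => /orP[->|]; rewrite // hc eqxx.
by case: il il' e1 e2 {p1 p2 p3 p4 p5 q1 q2 q3 q4 q5 k1 k2 k3 k4} => [x y] [x' y'] /= /val_inj -> /val_inj ->.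
Qed.

Local Close Scope ring_scope.

Lemma redM {n} (M : {set vpair n}) (u v : 'I_n.+1) :
  (u, v) \in M -> (v : nat) = (u : nat).+1 -> redp n u \in M.
Proof.
move=> h e; have r : is_red (u, v) by rewrite /is_red /= e.
by have [e' _] := red_redp _ _ r; rewrite e' in h.
Qed.

Lemma fib_lemma {R : numDomainType} n (c : nat -> R) a (M X : {set vpair n})
  (i l : 'I_n.+1) (XM : X \subset M)
  (Mlt : forall e, e \in M -> (e.1 < e.2)%N)
  (Xa : forall k, (k < n)%N -> c k = a -> connect (adj X) (inord k) (inord k.+1))
  (bl : is_a_block c a (i, l)) (l3 : (l < 3)%N)
  (nQ : forall k : 'I_n.+1, (i <= k < i + l)%N -> redp n k \in M -> False) :
  exists2 w' : 'I_n.+1, ((w' : nat) == 0)%N || (c (w' : nat).-1 != a) &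
     (w' != i) && (cls X w' == cls X i).
Proof.
have [p1 p2 p3 p4 p5] := blockP _ _ _ _ bl; rewrite /= in p1 p2 p3 p4 p5.
have iN : (i < n)%N by lia.
have ci : c i = a by apply: p3; lia.
have hxi := Xa _ iN ci; rewrite inord_val in hxi.
set y := (inord (i : nat).+1 : 'I_n.+1) in hxi.
have yv : (y : nat) = (i : nat).+1 by rewrite inordK // ltnS.
have ny : i != y.
  by apply/negP => /eqP h; move: yv; rewrite -h; apply: n_Sn.
have [z [hiz hzy]] := last_step _ _ _ hxi ny.
have zout : (z < i)%N \/ (i + l < z)%N.
  case/orP: hzy => hzy; have hM1 := subsetP XM _ hzy; have lt := Mlt _ hM1;
    rewrite /= in lt.
    left; case: (eqVneq (z : nat) i) => ez; last by lia.
    by exfalso; apply: (nQ z); [lia | apply: (redM M z y) => //; lia].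
  case: (ltnP (i + l) z) => hz; first by right.
  exfalso; apply: (nQ y); [lia | apply: (redM M y z) => //; lia].
have zn : (z <= n)%N by rewrite -ltnS.
have sz := stn_le c a z.
have szn : (stn c a z < n.+1)%N by lia.
exists (inord (stn c a z)); first by rewrite inordK //; apply: stn_start.
apply/andP; split.
  apply/negP => /eqP /(congr1 val); rewrite /= inordK // => e.
  case: zout => hz; first by lia.
  have cil : c (i + l) != a.
    by move: p5 => /orP[/eqP|//]; lia.
  have := stn_ge c a (i + l) z hz cil; lia.
rewrite cls_eq; apply: connect_trans (stn_conn n c a X Xa z zn) _.
by rewrite inord_val conn_sym.
Qed.

Local Close Scope ring_scope.

Lemma ST_card {R : numDomainType} n (c : nat -> R) a :
  (#|[set v : 'I_n.+1 | ((v : nat) == 0)%N || (c (v : nat).-1 != a)]|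
     <= #|[set k : 'I_n | c k != a]|.+1)%N.
Proof.
set NB := [set k : 'I_n | c k != a].
set ST := [set v : 'I_n.+1 | _].
have sub : ST \subset ord0 |: [set (inord (k : nat).+1 : 'I_n.+1) | k : 'I_n in NB].
  apply/subsetP => v; rewrite inE => /orP[/eqP v0|cv].
    by apply/setU1P; left; apply: val_inj.
  case: (eqVneq (v : nat) 0%N) => v0.
    by apply/setU1P; left; apply: val_inj.
  have hv : ((v : nat).-1 < n)%N by have := ltn_ord v; lia.
  apply/setU1P; right; apply/imsetP; exists (Ordinal hv); first by rewrite inE.
  by apply: val_inj; rewrite /= inordK; lia.
apply: (leq_trans (subset_leq_card sub)).
rewrite cardsU1; have h := leq_imset_card (fun k : 'I_n => (inord (k : nat).+1 : 'I_n.+1)) NB.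
by case: (_ \notin _); rewrite ?add1n ?add0n ?ltnS // (leq_trans h).
Qed.

Local Open Scope ring_scope.

Lemma path_cost_eq {R : numDomainType} n (c : nat -> R) a b
  (hc : forall k, (k < n)%N -> c k = a \/ c k = b) (hab : a != b) :
  path_cost n c = a * n%:R + (b - a) * #|[set k : 'I_n | c k != a]|%:R.
Proof.
rewrite /path_cost.
have -> : \sum_(k < n) c k = \sum_(k < n) (a + (b - a) * (c k != a)%:R).
  apply: eq_bigr => k _; case: (hc k (ltn_ord k)) => ->.
    by rewrite eqxx mulr0 addr0.
  by rewrite eq_sym hab mulr1 addrC subrK.
rewrite big_split /= sumr_const card_ord -mulr_sumr -natr_sum.
rewrite -[a *+ n]mulr_natr; congr (_ + _ * _%:R).
rewrite -sum1_card [RHS]big_mkcond /=; apply: eq_bigr => k _.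
by rewrite inE; case: (c k != a).
Qed.

Local Close Scope ring_scope.
Local Open Scope ring_scope.

Lemma final_arith (R : realFieldType) (a b : R) (s1 s2 d : nat) :
  0 <= a -> a < b -> (s2 <= 2 * d)%N ->
  Num.min ((s1 + s2)%N%:R * a)
    (((s1 + s2) %/ 2)%N%:R * (b - a)
     + ((s1 + s2) - 2 * ((s1 + s2) %/ 2))%N%:R * Num.min a (b - a))
  <= s1%:R * a + d%:R * (b - a).
Proof.
move=> ha hab hs.
set sg := (s1 + s2)%N; set q := (sg %/ 2)%N; set r := (sg - 2 * q)%N.
have e1 := divn_eq sg 2; have e2 := ltn_pmod sg (isT : (0 < 2)%N).
have hr : (r <= 1)%N by rewrite /r /q; lia.
have hsg : (sg = 2 * q + r)%N by rewrite /r /q; lia.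
have mb : Num.min a (b - a) <= b - a by rewrite ge_min lexx orbT.
have ma : Num.min a (b - a) <= a by rewrite ge_min lexx.
have m0 : 0 <= Num.min a (b - a) by rewrite le_min ha subr_ge0 ltW.
have rR : 0 <= r%:R :> R by rewrite ler0n.
have qR : 0 <= q%:R :> R by rewrite ler0n.
have dR : 0 <= d%:R :> R by rewrite ler0n.
have s1R : 0 <= s1%:R :> R by rewrite ler0n.
case: (leqP (q + r) d) => hqd.
  rewrite ge_min; apply/orP; right.
  have hd : q%:R + r%:R <= d%:R :> R by rewrite -natrD ler_nat.
  have h1 : r%:R * Num.min a (b - a) <= r%:R * (b - a) by apply: ler_wpM2l.
  nra.
have hdq : (d <= q)%N by lia.
have hs1 : (sg <= s1 + 2 * d)%N by rewrite /sg; lia.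
have hdqR : d%:R <= q%:R :> R by rewrite ler_nat.
have hs1R : 2 * q%:R + r%:R <= s1%:R + 2 * d%:R :> R.
  have : (2 * q + r <= s1 + 2 * d)%N by rewrite -hsg.
  by rewrite -(ler_nat R) natrD [X in _ <= X]natrD !natrM.
rewrite -/sg hsg natrD natrM.
case: (lerP (3 * a) b) => h3.
  rewrite ge_min; apply/orP; left; nra.
rewrite ge_min; apply/orP; right.
have h1 : r%:R * Num.min a (b - a) <= r%:R * a by apply: ler_wpM2l.
nra.
Qed.

Local Close Scope ring_scope.
Local Open Scope ring_scope.

Theorem lemma1 (R : realFieldType) (n : nat) (c : nat -> R) (a b : R)
  (ha : 0 <= a) (hab : a < b)
  (hc : forall k, (k < n)%N -> c k = a \/ c k = b)
  (F : {set vpair n}) (hF : leader_edges F)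
  (p : vpair n -> R) (hp : forall e, e \in F -> 0 <= p e)
  (M : {set vpair n}) (hM : is_MST c F p M) :
  let sigma := bad_a_blocks n c a in
  revenue F p M <=
    path_cost n c -
      Num.min (sigma%:R * a)
        ((sigma %/ 2)%:R * (b - a)
         + (sigma - 2 * (sigma %/ 2))%:R * Num.min a (b - a)).
Proof.
cbv zeta; set sigma := bad_a_blocks n c a.
have hM' := hM; case: hM' => [[sM cM hconn] hmin].
have Mpair : forall e, e \in M -> (e.1 < e.2)%N /\ (is_red e \/ e \in F /\ ~~ is_red e).
  move=> e /(subsetP sM); rewrite inE => /orP[]; [rewrite inE => r | move=> eF].
    by split; [move: r; rewrite /is_red => /eqP -> | left].
  by have /andP[pe nr] := hF e eF; split => //; right.
have redG : forall k, (k < n)%N -> redp n k \in red_edges n :|: F.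
  by move=> k kn; apply/setUP; left; exact: redp_red kn.
have F1 : forall e, e \in M -> weight c p e <= b.
  set Y := Xt c p M b.
  have hY : forall x y, connect (adj Y) x y.
    apply: path_conn => k kn.
    apply: (@exchange _ _ _ _ _ _ hM b (redp n k) (redG k kn)).
    by rewrite redp_weight //; case: (hc k kn) => ->; rewrite ?lexx // ltW.
  have cY := comp_le1 Y hY; have := compA Y.
  have YM : Y \subset M by apply/subsetP => x; rewrite inE => /andP[].
  move=> cY2.
  have YeqM : Y = M. apply/eqP; rewrite eqEcard YM cM /=. move: cY cY2. move=> h1 h2; have := leq_trans h2 (leq_add h1 (leqnn _)); rewrite add1n ltnS; apply.
  by move=> e eM; move: eM; rewrite -YeqM inE => /andP[].
set X := Xt c p M a.
have Xa : forall k, (k < n)%N -> c k = a -> connect (adj X) (inord k) (inord k.+1).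
  move=> k kn ck.
  apply: (@exchange _ _ _ _ _ _ hM a (redp n k) (redG k kn)).
  by rewrite redp_weight // ck.
have XM : X \subset M by apply/subsetP => x; rewrite inE => /andP[].
have cX := compA X.
have Fw : forall e, e \in F -> weight c p e = p e.
  by move=> e eF; have /andP[_ nr] := hF e eF; rewrite /weight (negbTE nr).
set MF := M :&: F.
have rev1 : revenue F p M <= a * #|MF :&: X|%:R + b * #|MF :\: X|%:R.
  rewrite /revenue -/MF (big_setID X) /=.
  have s1 : \sum_(e in MF :&: X) p e <= \sum_(e in MF :&: X) a.
    apply: ler_sum => e /setIP[/setIP[eM eF]].
    by rewrite inE -Fw // => /andP[].
  have s2 : \sum_(e in MF :\: X) p e <= \sum_(e in MF :\: X) b.
    apply: ler_sum => e /setDP[/setIP[eM eF] _].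
    by rewrite -Fw //; apply: F1.
  rewrite sumr_const -mulr_natr in s1; rewrite sumr_const -mulr_natr in s2.
  exact: lerD s1 s2.
have cMF : (#|MF| + #|M :&: red_edges n| = n)%N.
  have -> : MF = M :\: red_edges n.
    apply/setP => e; rewrite !inE; case eM: (e \in M); rewrite ?andbF ?andbT //=.
    case: (Mpair e eM) => _ [r|[eF nr]]; rewrite ?r ?eF ?nr //.
    by apply/negP => eF; have /andP[_] := hF e eF; rewrite r.
  by rewrite addnC cardsID cM.
have cMX : (#|MF :\: X| + #|X| <= n)%N.
  have h1 := cardsID X M; rewrite (setIidPr XM) cM in h1.
  have h2 : (#|MF :\: X| <= #|M :\: X|)%N.
    by apply: subset_leq_card; apply: setSD; apply: subsetIl.
  by apply: leq_trans (leq_add h2 (leqnn _)) _; rewrite addnC h1.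
have cMFX := cardsID X MF.
set BB := [set il : 'I_n.+1 * 'I_n.+1 | is_a_block c a il && ((il.2 : nat) < 3)%N].
have sigBB : sigma = #|BB| by [].
set Q := [set il : 'I_n.+1 * 'I_n.+1 |
           [exists k : 'I_n.+1, ((il.1 <= k)%N && (k < il.1 + il.2)%N) && (redp n k \in M)]].
have csig := cardsID Q BB.
have cs1 : (#|BB :&: Q| <= #|M :&: red_edges n|)%N.
  pose pk (il : 'I_n.+1 * 'I_n.+1) :=
    [pick k : 'I_n.+1 | ((il.1 <= k)%N && (k < il.1 + il.2)%N) && (redp n k \in M)].
  pose gm il := if pk il is Some k then redp n k else redp n 0.
  have gmP : forall il, il \in BB :&: Q -> exists k : 'I_n.+1,
      [/\ (il.1 <= k < il.1 + il.2)%N, redp n k \in M & gm il = redp n k].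
    move=> il /setIP[_]; rewrite inE => /existsP[k hk]; rewrite /gm /pk.
    case: pickP => [k' /andP[h1 h2]|/(_ k)]; last by rewrite hk.
    by exists k'.
  have inj : {in BB :&: Q &, injective gm}.
    move=> il il' hil hil'.
    have [k [hk1 hk2 ->]] := gmP il hil; have [k' [hk1' hk2' ->]] := gmP il' hil'.
    rewrite /redp => -[e1 _]; rewrite !inord_val in e1; subst k'.
    move: hil hil'; rewrite !inE => /andP[/andP[b1 _] _] /andP[/andP[b2 _] _].
    exact: block_uniq b1 b2 hk1 hk1'.
  rewrite -(card_in_imset inj); apply: subset_leq_card.
  apply/subsetP => _ /imsetP[il hil ->]; have [k [hk1 hk2 ->]] := gmP il hil.
  rewrite inE hk2 /=; apply: redp_red.
  move: hil; rewrite !inE => /andP[/andP[/blockP[_ p2 _ _ _] _] _].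
  by move/andP: hk1 => [_ h]; apply: leq_trans h p2.
set W := [set il.1 | il in BB :\: Q].
have cW : #|W| = #|BB :\: Q|.
  apply: card_in_imset => il il'; rewrite !inE => /andP[_ /andP[b1 _]] /andP[_ /andP[b2 _]] e1.
  have [q1 _ _ _ _] := blockP _ _ _ _ b1; have [q2 _ _ _ _] := blockP _ _ _ _ b2.
  apply: (@block_uniq _ _ _ _ _ _ il.1 b1 b2); rewrite ?e1; apply/andP; split => //; rewrite -[X in (X < _)%N]addn0 ltn_add2l //.
set ST := [set v : 'I_n.+1 | ((v : nat) == 0)%N || (c (v : nat).-1 != a)].
have WST : W \subset ST.
  apply/subsetP => _ /imsetP[il hil ->]; move: hil; rewrite !inE => /andP[_ /andP[/blockP[_ _ _ p4 _] _]].
  exact: p4.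
have fib : forall w, w \in W ->
    exists2 w', w' \in ST & (w' != w) && (cls X w' == cls X w).
  move=> _ /imsetP[[i l] hil ->] /=.
  move: hil; rewrite !inE => /andP[nQ /andP[bl l3]].
  have nQ' : forall k : 'I_n.+1, (i <= k < i + l)%N -> redp n k \in M -> False.
    by move=> k hk hkM; move/existsP: nQ; apply; exists k; rewrite /= hk hkM.
  have [w' h1 h2] := fib_lemma n c a M X i l XM (fun e eM => (Mpair e eM).1) Xa bl l3 nQ'.
  by exists w' => //; rewrite inE.
have fc := fiber_count _ _ (cls X) ST W WST fib.
have compST : comp X = #|cls X @: ST|.
  rewrite /comp; suff -> : [set cls X x | x : 'I_n.+1] = cls X @: ST by [].
  apply/setP => S; apply/imsetP/imsetP => -[v hv ->].
    have hs : (stn c a v < n.+1)%N by apply: leq_ltn_trans (stn_le c a v) _.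
    exists (inord (stn c a v)); first by rewrite inE inordK //; apply: stn_start.
    apply/cls_eqP; rewrite conn_sym.
    have := stn_conn n c a X Xa v (leq_ord v); by rewrite inord_val.
  by exists v.
have cST := ST_card n c a.
have cPC := path_cost_eq n c a b hc (negbT (lt_eqF hab)).
move: cST cPC; set nb := #|[set k : 'I_n | c k != a]| => cST cPC.
move: cX compST; set K := comp X => cX compST.
move: csig cs1 cW; set s1 := #|BB :&: Q|; set s2 := #|BB :\: Q| => csig cs1 cW.
move: rev1 cMFX cMX cMF; set k1 := #|MF :&: X|; set k2 := #|MF :\: X|; set m1 := #|MF|.
set mr := #|M :&: red_edges n| => rev1 cMFX cMX cMF.
move: fc cST cX cMX cW compST; set x := #|X|; set st := #|ST|; set wc := #|W|.
set img := #|cls X @: ST| => fc cST cX cMX cW compST.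
set d := (nb.+1 - K)%N.
have hd : (s2 <= 2 * d)%N by rewrite /d; lia.
have h1 : (m1 + s1 <= n)%N by lia.
have h2 : (k2 + d <= nb)%N by rewrite /d; lia.
have sig : sigma = (s1 + s2)%N by rewrite sigBB -csig.
rewrite sig.
have fa := final_arith R a b s1 s2 d ha hab hd.
apply: (le_trans rev1); rewrite cPC lerBrDr.
apply: le_trans (lerD (lexx _) fa) _.
have h1R : m1%:R + s1%:R <= n%:R :> R by rewrite -natrD ler_nat.
have h2R : k2%:R + d%:R <= nb%:R :> R by rewrite -natrD ler_nat.
have hkR : k1%:R + k2%:R = m1%:R :> R by rewrite -natrD cMFX.
have ba : 0 <= b - a by rewrite subr_ge0 ltW.
have p1 : a * (m1%:R + s1%:R) <= a * n%:R by apply: ler_wpM2l.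
have p2 : (b - a) * (k2%:R + d%:R) <= (b - a) * nb%:R by apply: ler_wpM2l.
rewrite -hkR in p1.
nra.
Qed.
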